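(* Let $X\in\mathbb{R}^p$ have distribution function $F$. Let $f(\cdot;\boldsymbol{\mu},\boldsymbol{\Sigma})$ be a family of probability densities on $\mathbb{R}^p$ indexed by $\boldsymbol{\mu}\in\mathbb{R}^p$ and positive definite $\boldsymbol{\Sigma}\in\mathbb{R}^{p\times p}$, and let $\phi(\cdot;\boldsymbol{\mu},\boldsymbol{\Sigma})$ denote the $N_p(\boldsymbol{\mu},\boldsymbol{\Sigma})$ density. Let $\mathcal{M}$ be a set of cluster configurations; each $m\in\mathcal{M}$ is a parameter $\boldsymbol{\theta}^{(m)}=\{(\pi_k^{(m)},\boldsymbol{\mu}_k^{(m)},\boldsymbol{\Sigma}_k^{(m)})\}_{k=1}^{K(\boldsymbol{\theta}^{(m)})}$ with $\pi_k^{(m)}>0$, $\boldsymbol{\mu}_k^{(m)}\in\mathbb{R}^p$, $\boldsymbol{\Sigma}_k^{(m)}$ positive definite. For such $\boldsymbol{\theta}$ define the quadratic score $\mathrm{qs}(\mathbf{x};\boldsymbol{\theta}_k)=\log\pi_k-\tfrac12\log\det\boldsymbol{\Sigma}_k-\tfrac12(\mathbf{x}-\boldsymbol{\mu}_k)^\top\boldsymbol{\Sigma}_k^{-1}(\mathbf{x}-\boldsymbol{\mu}_k)$, the sets $Q_k(\boldsymbol{\theta})=\{\mathbf{x}:\mathrm{qs}(\mathbf{x};\boldsymbol{\theta}_k)=\max_{1\le j\le K(\boldsymbol{\theta})}\mathrm{qs}(\mathbf{x};\boldsymbol{\theta}_j)\}$ (assumed to form a partition of $\mathbb{R}^p$),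 and $$L(\boldsymbol{\theta})=\sum_{k=1}^{K(\boldsymbol{\theta})}\int_{Q_k(\boldsymbol{\theta})}\log\big(\pi_k f(\mathbf{x};\boldsymbol{\mu}_k,\boldsymbol{\Sigma}_k)\big)\,dF,\qquad H(\boldsymbol{\theta})=\sum_{k=1}^{K(\boldsymbol{\theta})}\int_{Q_k(\boldsymbol{\theta})}\mathrm{qs}(\mathbf{x};\boldsymbol{\theta}_k)\,dF.$$ Assume all these integrals exist and that (C3) $\inf_{m\in\mathcal{M}}\Big\{\int_{Q_k(\boldsymbol{\theta}^{(m)})}\log f(\mathbf{x};\boldsymbol{\mu}_k^{(m)},\boldsymbol{\Sigma}_k^{(m)})\,dF-\int_{Q_k(\boldsymbol{\theta}^{(m)})}\log\phi(\mathbf{x};\boldsymbol{\mu}_k^{(m)},\boldsymbol{\Sigma}_k^{(m)})\,dF\Big\}\ge 0$ for all $k=1,\dots,K(\boldsymbol{\theta}^{(m)})$. Then for every $m\in\mathcal{M}$, $$H(\boldsymbol{\theta}^{(m)})=c+L(\boldsymbol{\theta}^{(m)})-\Lambda(\boldsymbol{\theta}^{(m)}),$$ where $c$ is a positive constant (not depending on $m$) and $$\Lambda(\boldsymbol{\theta}^{(m)})=\sum_{k=1}^{K(\boldsymbol{\theta}^{(m)})}\int_{Q_k(\boldsymbol{\theta}^{(m)})}\log\!\left(\frac{f(\mathbf{x};\boldsymbol{\mu}_k^{(m)},\boldsymbol{\Sigma}_k^{(m)})}{\phi(\mathbf{x};\boldsymbol{\mu}_k^{(m)},\boldsymbol{\Sigma}_k^{(m)})}\right)dF\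 \ge 0.$$
   Context: $K(\boldsymbol{\theta})$ denotes the number of groups described by a configuration $\boldsymbol{\theta}$; $\boldsymbol{\theta}_k=(\pi_k,\boldsymbol{\mu}_k,\boldsymbol{\Sigma}_k)$ represents size, center and scatter of the $k$-th cluster. $H$ is the population hard score criterion and $L$ the population partition log-likelihood-type criterion. *)

(* Defs.v *)
From HB Require Import structures.
From mathcomp Require Import all_boot all_order all_algebra.
From mathcomp Require Import all_classical all_reals all_analysis.
Set Implicit Arguments. Unset Strict Implicit. Unset Printing Implicit Defensive.
Import Order.TTheory GRing.Theory Num.Theory.
Import numFieldNormedType.Exports.
Local Open Scope classical_set_scope.
Local Open Scope ring_scope.

Definition Rp (R : realType) (p : nat) :=
  g_sigma_algebraType (@open 'rV[R]_p).

Definition posdef (R : realType) (p : nat) (S : 'M[R]_p) : Prop :=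
  S^T = S /\ forall v : 'rV[R]_p, v != 0 -> 0 < (v *m S *m v^T) 0 0.

Definition mahal (R : realType) (p : nat) (x mu : 'rV[R]_p) (S : 'M[R]_p) : R :=
  ((x - mu) *m invmx S *m (x - mu)^T) 0 0.

Definition gauss_pdf (R : realType) (p : nat) (x mu : 'rV[R]_p) (S : 'M[R]_p) : R :=
  expR (- (1/2) * mahal x mu S) / Num.sqrt ((2 * pi) ^+ p * \det S).

Record config (R : realType) (p : nat) := Config {
  K : nat;
  cpi : 'I_K -> R;
  cmu : 'I_K -> 'rV[R]_p;
  cSigma : 'I_K -> 'M[R]_p }.

Definition valid_config (R : realType) (p : nat) (th : config R p) : Prop :=
  forall k : 'I_(K th), 0 < cpi k /\ posdef (cSigma k).

Definition qs (R : realType) (p : nat) (th : config R p) (k : 'I_(K th))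
    (x : 'rV[R]_p) : R :=
  ln (cpi k) - (1/2) * ln (\det (cSigma k)) - (1/2) * mahal x (cmu k) (cSigma k).

Definition Qset (R : realType) (p : nat) (th : config R p) (k : 'I_(K th)) :
    set (Rp R p) :=
  [set x : Rp R p | forall j : 'I_(K th), qs j x <= qs k x].

Definition is_lebesgue_Rp (R : realType) (p : nat)
    (leb : {measure set (Rp R p) -> \bar R}) : Prop :=
  forall a b : 'rV[R]_p, (forall i, a 0 i <= b 0 i) ->
    leb [set x : Rp R p | forall i, a 0 i < (x : 'rV[R]_p) 0 i <= b 0 i]
    = (\prod_(i < p) (b 0 i - a 0 i))%:E.

Local Open Scope ereal_scope.

Definition Lcrit (R : realType) (p : nat) (F : probability (Rp R p) R)
    (f : 'rV[R]_p -> 'rV[R]_p -> 'M[R]_p -> R) (th : config R p) : \bar R :=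
  \sum_(k < K th) \int[F]_(x in Qset k)
     (ln (cpi k * f x (cmu k) (cSigma k)))%:E.

Definition Hcrit (R : realType) (p : nat) (F : probability (Rp R p) R)
    (th : config R p) : \bar R :=
  \sum_(k < K th) \int[F]_(x in Qset k) (qs k x)%:E.

Definition Lambda (R : realType) (p : nat) (F : probability (Rp R p) R)
    (f : 'rV[R]_p -> 'rV[R]_p -> 'M[R]_p -> R) (th : config R p) : \bar R :=
  \sum_(k < K th) \int[F]_(x in Qset k)
     (ln (f x (cmu k) (cSigma k) / gauss_pdf x (cmu k) (cSigma k)))%:E.

(* Main.v *)
Require Import Defs.
From HB Require Import structures.
From mathcomp Require Import all_boot all_order all_algebra.
From mathcomp Require Import all_classical all_reals all_analysis.
From mathcomp Require Import lra polyrcf.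
Import Order.TTheory GRing.Theory Num.Theory.
Import numFieldNormedType.Exports.
Local Open Scope classical_set_scope.
Local Open Scope ring_scope.


Lemma charpoly_horner (R : comNzRingType) n (A : 'M[R]_n) x :
  (char_poly A).[x] = \det (x%:M - A).
Proof.
rewrite /char_poly -horner_evalE -det_map_mx; congr (\det _).
apply/matrixP => i j; rewrite !mxE /=.
case: eqP => _; rewrite ?mulr1n ?mulr0n /horner_eval ?hornerE //.
Qed.

Lemma posdef_det_gt0 (R : realType) p (S : 'M[R]_p) :
  (S^T = S /\ forall v : 'rV[R]_p, v != 0 -> 0 < (v *m S *m v^T) 0 0) ->
  0 < \det S.
Proof.
move=> [_ HS].
have Hnz : forall x : R, 0 <= x -> \det (x%:M - - S) != 0.
  move=> x x0; apply/negP => /det0P [v vn0 vA].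
  have := HS v vn0.
  have : ((v *m (x%:M - - S)) *m v^T) 0 0 = 0 by rewrite vA mul0mx mxE.
  rewrite opprK mulmxDr mulmxDl mxE mul_mx_scalar -scalemxAl mxE => E.
  have vv : 0 <= (v *m v^T) 0 0.
    rewrite mxE; apply: sumr_ge0 => i _; rewrite mxE; by rewrite -expr2 sqr_ge0.
  have := mulr_ge0 x0 vv. lra.
have [n Hn] := @poly_pinfty_gt_lc R (char_poly (- S)) ltac:(by rewrite (monicP (char_poly_monic _))).
rewrite (monicP (char_poly_monic _)) in Hn.
rewrite ltNge; apply/negP => d0.
have := @poly_ivt R (char_poly (- S)) 0 (Num.max n 0).
rewrite le_max lexx orbT => /(_ isT).
have z0 : (0 : R)%:M = (0 : 'M[R]_p) by apply/matrixP=> i j; rewrite !mxE mul0rn.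
rewrite !charpoly_horner z0 sub0r opprK d0 /=.
have := Hn (Num.max n 0); rewrite le_max lexx /= => /(_ isT).
rewrite charpoly_horner opprK => h1.
move/(_ (le_trans ler01 h1)) => [x /andP [x0 _]]; rewrite /root charpoly_horner => /eqP h.
by have := Hnz x x0; rewrite h eqxx.
Qed.

Lemma gauss_facts (R : realType) p (x mu : 'rV[R]_p) (S : 'M[R]_p) :
  posdef S -> 0 < gauss_pdf x mu S /\
  ln (gauss_pdf x mu S) = - (1/2) * mahal x mu S
     - (1/2) * (p%:R * ln (2 * pi) + ln (\det S)).
Proof.
move=> /posdef_det_gt0 d0.
have pi0 : (0:R) < 2 * pi by rewrite mulr_gt0 // pi_gt0.
have D0 : 0 < (2 * pi) ^+ p * \det S by rewrite mulr_gt0 // exprn_gt0.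
have sD : 0 < Num.sqrt ((2 * pi) ^+ p * \det S) by rewrite sqrtr_gt0.
split; first by rewrite /gauss_pdf divr_gt0 // expR_gt0.
rewrite /gauss_pdf ln_div ?posrE ?expR_gt0 // expRK.
have E1 : ln ((2 * pi) ^+ p * \det S) = 2 * ln (Num.sqrt ((2 * pi) ^+ p * \det S)).
  rewrite -{1}(sqr_sqrtr (ltW D0)) lnXn // mulr2n; lra.
have E2 : ln ((2 * pi) ^+ p * \det S) = p%:R * ln (2 * pi) + ln (\det S).
  rewrite lnM ?posrE ?exprn_gt0 // lnXn //; congr (_ + _); exact: esym (mulr_natl _ _).
move: E1 E2; set a := ln (Num.sqrt _); set b := ln (_ * _).
lra.
Qed.

Theorem proposition2 (R : realType) (p : nat) (hp : (0 < p)%N)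
  (F : probability (Rp R p) R)
  (f : 'rV[R]_p -> 'rV[R]_p -> 'M[R]_p -> R)
  (M : set (config R p)) :
  (* f(.;mu,Sigma) is a probability density on R^p *)
  (forall leb : {measure set (Rp R p) -> \bar R}, is_lebesgue_Rp leb ->
     forall (mu : 'rV[R]_p) (S : 'M[R]_p), posdef S ->
       (forall x, 0 <= f x mu S) /\
       measurable_fun [set: Rp R p] (fun x : Rp R p => f x mu S) /\
       (\int[leb]_(x in [set: Rp R p]) (f x mu S)%:E = 1)%E) ->
  (* every configuration in M is a valid parameter *)
  (forall th, M th -> valid_config th) ->
  (* the sets Q_k(theta) form a partition of R^p *)
  (forall th, M th -> forall x : Rp R p, exists! k : 'I_(K th), Qset k x) ->
  (* all the integrals exist *)
  (forall th, M th -> forall k : 'I_(K th),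
     measurable (Qset k) /\
     F.-integrable (Qset k) (fun x => (ln (cpi k * f x (cmu k) (cSigma k)))%:E) /\
     F.-integrable (Qset k) (fun x => (qs k x)%:E) /\
     F.-integrable (Qset k) (fun x => (ln (f x (cmu k) (cSigma k)))%:E) /\
     F.-integrable (Qset k) (fun x => (ln (gauss_pdf x (cmu k) (cSigma k)))%:E) /\
     F.-integrable (Qset k) (fun x =>
        (ln (f x (cmu k) (cSigma k) / gauss_pdf x (cmu k) (cSigma k)))%:E) /\
     (* existence of the integral of log f entails f > 0 F-a.e. on Q_k *)
     {ae F, forall x, Qset k x -> 0 < f x (cmu k) (cSigma k)}) ->
  (* (C3) *)
  (forall k : nat, (0 <= ereal_inf
     [set d | exists th, M th /\ exists k' : 'I_(K th), nat_of_ord k' = k /\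
        d = (\int[F]_(x in Qset k') (ln (f x (cmu k') (cSigma k')))%:E
             - \int[F]_(x in Qset k')
                 (ln (gauss_pdf x (cmu k') (cSigma k')))%:E)%E])%E) ->
  exists c : R, 0 < c /\
    forall th, M th ->
      Hcrit F th = (c%:E + Lcrit F f th - Lambda F f th)%E /\
      (0 <= Lambda F f th)%E.
Proof.
move=> Hdens Hvalid Hpart Hint HC3.
set c : R := p%:R / 2 * ln (2 * pi).
have c0 : 0 < c.
  rewrite /c mulr_gt0 // ?divr_gt0 ?ltr0n // ln_gt0 //.
  have := pi_ge2 R; lra.
exists c; split => // th Mth.
have Hpt : forall (k : 'I_(K th)) x, 0 < f x (cmu k) (cSigma k) ->
   qs k x = ln (cpi k * f x (cmu k) (cSigma k))
     - ln (f x (cmu k) (cSigma k) / gauss_pdf x (cmu k) (cSigma k)) + c.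
  move=> k x fx; have [pik Sk] := Hvalid th Mth k.
  have [g0 lng] := @gauss_facts _ _ x (cmu k) _ Sk.
  rewrite lnM ?posrE // ln_div ?posrE // lng /qs /c; lra.
have Hk : forall k : 'I_(K th),
  (\int[F]_(x in Qset k) (qs k x)%:E =
  \int[F]_(x in Qset k) (ln (cpi k * f x (cmu k) (cSigma k)))%:E
   - \int[F]_(x in Qset k)
       (ln (f x (cmu k) (cSigma k) / gauss_pdf x (cmu k) (cSigma k)))%:E
   + c%:E * F (Qset k))%E.
  move=> k; have [mQ [iA [iq [_ [_ [iB ae]]]]]] := Hint th Mth k.
  have iAB := integrableB mQ iA iB.
  have ic := finite_measure_integrable_cst F c mQ.
  have iS := integrableD mQ iAB ic.
  rewrite -(integralB mQ iA iB) -(integral_cst F mQ c%:E).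
  rewrite -(integralD mQ iAB ic).
  apply: ae_eq_integral => //.
  - exact: measurable_int iq.
  - exact: measurable_int iS.
  - apply: filterS ae => x H Qx /=.
    by rewrite (Hpt k x (H Qx)) EFinD EFinB.
have HQ : \big[setU/set0]_(k < K th) Qset k = [set: Rp R p].
  apply/seteqP; split => // x _.
  have [k [Qk _]] := Hpart th Mth x.
  by rewrite (bigD1 k) //=; left.
have Hsum : (\sum_(k < K th) F (Qset k) = 1)%E.
  rewrite -measure_semi_additive_ord.
  - by rewrite HQ; apply: probability_setT.
  - by move=> k; have [] := Hint th Mth k.
  - move=> i j _ _ [x [Qi Qj]].
    have [k [_ u]] := Hpart th Mth x.
    by rewrite -(u i Qi) -(u j Qj).
  - by rewrite HQ.
split.
  rewrite /Hcrit /Lcrit /Lambda.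
  under eq_bigr do rewrite Hk.
  rewrite big_split big_split /= fin_num_sumeN; last first.
    move=> k _; have [mQ [_ [_ [_ [_ [iB _]]]]]] := Hint th Mth k.
    exact: (integrable_fin_num mQ iB).
  rewrite -ge0_sume_distrr; last by move=> k _; exact: measure_ge0.
  by rewrite Hsum mule1 [LHS]addeC addeA.
apply: sume_ge0 => k _.
have [mQ [_ [_ [iF [iG [iB ae]]]]]] := Hint th Mth k.
have [pik Sk] := Hvalid th Mth k.
have -> : (\int[F]_(x in Qset k)
       (ln (f x (cmu k) (cSigma k) / gauss_pdf x (cmu k) (cSigma k)))%:E
   = \int[F]_(x in Qset k) (ln (f x (cmu k) (cSigma k)))%:E
     - \int[F]_(x in Qset k) (ln (gauss_pdf x (cmu k) (cSigma k)))%:E)%E.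
  rewrite -(integralB mQ iF iG).
  apply: ae_eq_integral => //.
  - exact: measurable_int iB.
  - exact: measurable_int (integrableB mQ iF iG).
  - apply: filterS ae => x H Qx /=.
    have [g0 _] := @gauss_facts _ _ x (cmu k) _ Sk.
    by rewrite ln_div ?posrE ?(H Qx) // EFinB.
apply: le_trans (HC3 k) _.
apply: ereal_inf_lbound.
exists th; split => //; exists k; split => //.
Qed.
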